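(* Let $n\geq 1$. For a Tamari interval diagram $(u,v)$ of size $n$, let $\chi(u,v)$ be the binary relation $\lhd$ on the set $\{x_1,\dots,x_n\}$ consisting exactly of the pairs $x_{i+l}\lhd x_i$ for all $i\in[n]$ and $0\leq l\leq u_i$, and the pairs $x_{i-k}\lhd x_i$ for all $i\in[n]$ and $0\leq k\leq v_i$. Then $\chi(u,v)$ is an interval-poset of size $n$, and the map $\chi$ is a bijection from $\mathcal{TID}_n$ (the set of Tamari interval diagrams of size $n$) to $\mathcal{IP}_n$ (the set of interval-posets of size $n$).
   Context: $[n]=\{1,\dots,n\}$. A Tamari diagram of size $n$ is a word $u=u_1\cdots u_n$ of integers with $0\leq u_i\leq n-i$ for all $i\in[n]$ and $u_{i+j}\leq u_i-j$ for all $i\in[n]$ and $0\leq j\leq u_i$. A dual Tamari diagram of size $n$ is a word $v=v_1\cdots v_n$ of integers with $0\leq v_i\leq i-1$ for all $i\in[n]$ and $v_{i-j}\leq v_i-j$ for all $i\in[n]$ and $0\leq j\leq v_i$. A Tamari diagram $u$ and a dual Tamari diagram $v$ of the same size $n$ are compatible if for all $1\leq i<j\leq n$ with $j-i\leq u_i$ one has $v_j<j-i$; a compatible pair $(u,v)$ is a Tamari interval diagram of size $n$. An interval-poset of size $n$ is a partial order $\lhd$ on $\{x_1,\dots,x_n\}$ such that for all $i<k$: if $x_k\lhd x_i$ then $x_j\lhd x_i$ for all $i<j<k$, and if $x_i\lhd x_k$ then $x_j\lhd x_k$ for all $i<j<k$. *)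

(* Defs.v *)
From mathcomp Require Import all_boot.
Set Implicit Arguments. Unset Strict Implicit. Unset Printing Implicit Defensive.

(* Convention: a word w = w_1 ... w_n is a [seq nat] of size n, and the
   letter w_i (1 <= i <= n) is [nth 0 w (i - 1)].  The element x_i of
   {x_1,...,x_n} is the ordinal [i - 1 : 'I_n].  A binary relation on
   {x_1,...,x_n} is a finite set of pairs; (a, b) \in R means x_(a+1) <| x_(b+1). *)

Definition letter (w : seq nat) (i : nat) : nat := nth 0 w i.-1.

Definition tamari_diagram (n : nat) (u : seq nat) : Prop :=
  size u = n /\
  (forall i, 1 <= i <= n -> letter u i <= n - i) /\
  (forall i j, 1 <= i <= n -> j <= letter u i ->
     letter u (i + j) <= letter u i - j).

Definition dual_tamari_diagram (n : nat) (v : seq nat) : Prop :=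
  size v = n /\
  (forall i, 1 <= i <= n -> letter v i <= i - 1) /\
  (forall i j, 1 <= i <= n -> j <= letter v i ->
     letter v (i - j) <= letter v i - j).

Definition compatible (n : nat) (u v : seq nat) : Prop :=
  forall i j, 1 <= i -> i < j -> j <= n -> j - i <= letter u i ->
    letter v j < j - i.

Definition tamari_interval_diagram (n : nat) (u v : seq nat) : Prop :=
  [/\ tamari_diagram n u, dual_tamari_diagram n v & compatible n u v].

Definition partial_order (n : nat) (R : {set 'I_n * 'I_n}) : Prop :=
  [/\ (forall x, (x, x) \in R),
      (forall x y, (x, y) \in R -> (y, x) \in R -> x = y) &
      (forall x y z, (x, y) \in R -> (y, z) \in R -> (x, z) \in R)].

Definition interval_poset (n : nat) (R : {set 'I_n * 'I_n}) : Prop :=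
  partial_order R /\
  (forall i j k : 'I_n, i < j < k ->
     ((k, i) \in R -> (j, i) \in R) /\ ((i, k) \in R -> (j, k) \in R)).

Definition chi (n : nat) (u v : seq nat) : {set 'I_n * 'I_n} :=
  [set p : 'I_n * 'I_n |
     ((p.2 <= p.1) && (p.1 - p.2 <= letter u p.2.+1)) ||
     ((p.1 <= p.2) && (p.2 - p.1 <= letter v p.2.+1))].

(* Main.v *)
Require Import Defs.
From mathcomp Require Import all_boot.
From mathcomp Require Import zify.
Set Implicit Arguments. Unset Strict Implicit. Unset Printing Implicit Defensive.

Lemma chiE n u v (a b : 'I_n) : ((a, b) \in chi n u v) =
  ((b <= a) && (a - b <= letter u b.+1)) || ((a <= b) && (b - a <= letter v b.+1)).
Proof. by rewrite inE. Qed.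

Section Part1.
Variables (n : nat) (u v : seq nat).
Hypothesis H : tamari_interval_diagram n u v.

Lemma Hu2' a b : a < n -> b <= a -> a - b <= letter u b.+1 ->
  letter u a.+1 <= letter u b.+1 - (a - b).
Proof.
case: H => [[_ [_ h]] _ _] ha hb hab.
have := h b.+1 (a - b); rewrite (_ : b.+1 + (a - b) = a.+1); last by lia.
apply; [lia | done].
Qed.

Lemma Hv2' a b : b < n -> a <= b -> b - a <= letter v b.+1 ->
  letter v a.+1 <= letter v b.+1 - (b - a).
Proof.
case: H => [_ [_ [_ h]] _] ha hb hab.
have := h b.+1 (b - a); rewrite (_ : b.+1 - (b - a) = a.+1); last by lia.
apply; [lia | done].
Qed.

Lemma Comp' a b : a < b -> b < n -> b - a <= letter u a.+1 -> letter v b.+1 < b - a.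
Proof.
case: H => [_ _ h] hab hb hu.
have := h a.+1 b.+1; rewrite (_ : b.+1 - a.+1 = b - a); last by lia.
apply; lia.
Qed.

Lemma part1 : interval_poset (chi n u v).
Proof.
split; first split.
- by move=> x; rewrite chiE subnn !leqnn.
- move=> x y; rewrite !chiE => h1 h2; apply: val_inj => /=.
  have := ltn_ord x; have := ltn_ord y.
  have c1 := @Comp' x y; have c2 := @Comp' y x.
  lia.
- move=> x y z; rewrite !chiE => h1 h2.
  have := ltn_ord x; have := ltn_ord y; have := ltn_ord z.
  have a1 := @Hu2' y z (ltn_ord y).
  have a2 := @Hv2' y z (ltn_ord z).
  have c1 := @Comp' y z; have c2 := @Comp' z y.
  lia.
- move=> i j k hijk; rewrite !chiE; split=> h; lia.
Qed.

End Part1.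

Lemma inj_u n u v u' v' : tamari_interval_diagram n u v ->
  chi n u v = chi n u' v' -> forall i, i < n -> letter u i.+1 <= letter u' i.+1.
Proof.
case=> [[_ [hb _]] _ _] E i hi.
have := hb i.+1; move=> hb'.
have ha : i + letter u i.+1 < n by have := hb' (ltac:(lia)); lia.
have := @chiE n u v (Ordinal ha) (Ordinal hi).
rewrite E chiE /= => e.
have : ((i <= i + letter u i.+1) && (i + letter u i.+1 - i <= letter u i.+1)) by lia.
lia.
Qed.

Lemma inj_v n u v u' v' : tamari_interval_diagram n u v ->
  chi n u v = chi n u' v' -> forall i, i < n -> letter v i.+1 <= letter v' i.+1.
Proof.
case=> [_ [_ [hb _]] _] E i hi.
have := hb i.+1; move=> hb'.
have ha : i - letter v i.+1 < n by lia.
have := @chiE n u v (Ordinal ha) (Ordinal hi).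
rewrite E chiE /= => e.
have := hb' (ltac:(lia)).
lia.
Qed.

Lemma seq_eq n (s t : seq nat) : size s = n -> size t = n ->
  (forall i, i < n -> letter s i.+1 = letter t i.+1) -> s = t.
Proof.
move=> hs ht h; apply: (@eq_from_nth _ 0); first by rewrite hs ht.
by move=> i; rewrite hs => /h.
Qed.

Section Surj.
Variables (n : nat) (R : {set 'I_n * 'I_n}).
Hypothesis HR : interval_poset R.

Definition UU (b : nat) := \max_(p : 'I_n * 'I_n | (p.2 == b :> nat) && (p.2 <= p.1) && (p \in R)) (p.1 - p.2).
Definition VV (b : nat) := \max_(p : 'I_n * 'I_n | (p.2 == b :> nat) && (p.1 <= p.2) && (p \in R)) (p.2 - p.1).

Lemma refl_R x : (x, x) \in R.
Proof. by case: HR => [[]]. Qed.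

Lemma UU_ge (a b : 'I_n) : b <= a -> (a, b) \in R -> a - b <= UU b.
Proof.
move=> h1 h2; rewrite /UU.
apply: (leq_bigmax_cond (a, b) (F := fun p : 'I_n * 'I_n => p.1 - p.2)).
by rewrite /= eqxx h1 h2.
Qed.

Lemma VV_ge (a b : 'I_n) : a <= b -> (a, b) \in R -> b - a <= VV b.
Proof.
move=> h1 h2; rewrite /VV.
apply: (leq_bigmax_cond (a, b) (F := fun p : 'I_n * 'I_n => p.2 - p.1)).
by rewrite /= eqxx h1 h2.
Qed.

Lemma UU_wit (b : 'I_n) : exists a : 'I_n, [/\ b <= a, (a, b) \in R & UU b = a - b].
Proof.
rewrite /UU (bigmax_eq_arg (b, b)); last by rewrite /= eqxx leqnn refl_R.
case: arg_maxnP => [|p]; first by rewrite /= eqxx leqnn refl_R.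
move=> /andP [/andP [/eqP e h1] h2] _.
have -> : b = p.2 by apply: val_inj.
by exists p.1; split; case: p {e} h1 h2.
Qed.

Lemma VV_wit (b : 'I_n) : exists a : 'I_n, [/\ a <= b, (a, b) \in R & VV b = b - a].
Proof.
rewrite /VV (bigmax_eq_arg (b, b)); last by rewrite /= eqxx leqnn refl_R.
case: arg_maxnP => [|p]; first by rewrite /= eqxx leqnn refl_R.
move=> /andP [/andP [/eqP e h1] h2] _.
have -> : b = p.2 by apply: val_inj.
by exists p.1; split; case: p {e} h1 h2.
Qed.

Lemma UU_char (a b : 'I_n) : b <= a -> ((a, b) \in R) = (a - b <= UU b).
Proof.
move=> h; apply/idP/idP; first exact: UU_ge.
move=> hle; have [a0 [h1 h2 h3]] := UU_wit b.
case: (ltngtP b a) => hba; first last.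
- have -> : a = b by apply: ord_inj; lia.
  exact: refl_R.
- lia.
move: hba => hba.
case: (ltngtP a a0) => haa.
- by case: HR => _ /(_ b a a0) []; [lia | move=> + _; apply].
- lia.
- by have -> : a = a0 by (apply: ord_inj; lia).
Qed.

Lemma VV_char (a b : 'I_n) : a <= b -> ((a, b) \in R) = (b - a <= VV b).
Proof.
move=> h; apply/idP/idP; first exact: VV_ge.
move=> hle; have [a0 [h1 h2 h3]] := VV_wit b.
case: (ltngtP a b) => hba; first last.
- have -> : a = b by apply: ord_inj; lia.
  exact: refl_R.
- lia.
move: hba => hba.
case: (ltngtP a a0) => haa.
- lia.
- by case: HR => _ /(_ a0 a b) []; [lia | move=> _; apply].
- by have -> : a = a0 by (apply: ord_inj; lia).
Qed.

End Surj.

Lemma letter_mk (f : nat -> nat) n i : 1 <= i <= n -> letter (mkseq f n) i = f i.-1.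
Proof. by move=> h; rewrite /letter nth_mkseq //; lia. Qed.

Lemma trans_R n (R : {set 'I_n * 'I_n}) : interval_poset R ->
  forall x y z, (x, y) \in R -> (y, z) \in R -> (x, z) \in R.
Proof. by case=> [[_ _ t]] _; exact: t. Qed.

Lemma antisym_R n (R : {set 'I_n * 'I_n}) : interval_poset R ->
  forall x y, (x, y) \in R -> (y, x) \in R -> x = y.
Proof. by case=> [[_ a _]] _; exact: a. Qed.

Lemma surj n (R : {set 'I_n * 'I_n}) : interval_poset R ->
  exists u v, tamari_interval_diagram n u v /\ chi n u v = R.
Proof.
move=> HR.
exists (mkseq (UU R) n), (mkseq (VV R) n); split; first split.
- split; first by rewrite size_mkseq.
  split.
  + move=> i hi; rewrite letter_mk //.
    have hb : i.-1 < n by lia.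
    have [a [h1 h2 h3]] := UU_wit HR (Ordinal hb).
    rewrite /= in h3; rewrite h3; have := ltn_ord a; lia.
  + move=> i j hi hj; rewrite letter_mk // in hj *.
    have hb : i.-1 < n by lia.
    have [a [h1 h2 h3]] := UU_wit HR (Ordinal hb).
    rewrite /= in h1 h3; rewrite h3 in hj *.
    have hc : i.-1 + j < n by have := ltn_ord a; lia.
    rewrite letter_mk; last by lia.
    have hcb : (Ordinal hc, Ordinal hb) \in R.
      by rewrite (UU_char HR) /=; [rewrite h3; lia | lia].
    have [a1 [h4 h5 h6]] := UU_wit HR (Ordinal hc).
    have := UU_ge _ (trans_R HR h5 hcb).
    rewrite /= in h4 h6 *; rewrite (_ : (i + j).-1 = i.-1 + j); last by lia.
    rewrite h6 h3; lia.
- split; first by rewrite size_mkseq.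
  split.
  + move=> i hi; rewrite letter_mk //.
    have hb : i.-1 < n by lia.
    have [a [h1 h2 h3]] := VV_wit HR (Ordinal hb).
    rewrite /= in h3; rewrite h3; lia.
  + move=> i j hi hj; rewrite letter_mk // in hj *.
    have hb : i.-1 < n by lia.
    have [a [h1 h2 h3]] := VV_wit HR (Ordinal hb).
    rewrite /= in h1 h3; rewrite h3 in hj *.
    have hc : i.-1 - j < n by lia.
    rewrite letter_mk; last by lia.
    have hcb : (Ordinal hc, Ordinal hb) \in R.
      by rewrite (VV_char HR) /=; [rewrite h3; lia | lia].
    have [a1 [h4 h5 h6]] := VV_wit HR (Ordinal hc).
    have := VV_ge _ (trans_R HR h5 hcb).
    rewrite /= in h4 h6 *; rewrite (_ : (i - j).-1 = i.-1 - j); last by lia.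
    rewrite h6 h3; lia.
- move=> i j hi hij hj; rewrite !letter_mk; try lia; move=> hu.
  have hb : i.-1 < n by lia.
  have hc : j.-1 < n by lia.
  have hcb : (Ordinal hc, Ordinal hb) \in R.
    by rewrite (UU_char HR) /=; lia.
  case: (leqP (j - i) (VV R j.-1)) => // hv.
  have hbc : (Ordinal hb, Ordinal hc) \in R.
    by rewrite (VV_char HR) /=; lia.
  have := antisym_R HR hbc hcb => /(congr1 val) /=; lia.
- apply/setP => [[a b]]; rewrite chiE !letter_mk; try (have := ltn_ord b; lia).
  rewrite /=.
  case: (ltngtP a b) => h.
  + by rewrite (VV_char HR); lia.
  + by rewrite (UU_char HR); lia.
  + have -> : a = b by apply: ord_inj.
    rewrite refl_R //; lia.
Qed.

Theorem theorem1p4 (n : nat) (hn : 1 <= n) :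
  (forall u v, tamari_interval_diagram n u v -> interval_poset (chi n u v)) /\
  (forall u v u' v', tamari_interval_diagram n u v ->
     tamari_interval_diagram n u' v' -> chi n u v = chi n u' v' ->
     u = u' /\ v = v') /\
  (forall R : {set 'I_n * 'I_n}, interval_poset R ->
     exists u v, tamari_interval_diagram n u v /\ chi n u v = R).
Proof.
split; first exact: part1.
split; last exact: surj.
move=> u v u' v' H H' E.
have [[su _] [sv _] _] := H; have [[su' _] [sv' _] _] := H'.
split; apply: (seq_eq (n := n)) => // i hi; apply/eqP; rewrite eqn_leq.
- by rewrite (inj_u H E) // (inj_u H' (esym E)).
- by rewrite (inj_v H E) // (inj_v H' (esym E)).
Qed.
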